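(* There is no automorphism $\varphi$ of $E$ of type 4 which is a translation by a constant, i.e. such that for some basis $\{e_n\}_{n\in\mathbb{N}}$ of $L$ and some fixed $P\in E$ containing a summand of length $\ge2$, one has $\varphi(e_n)=-e_n+2P$ for all $n\in\mathbb{N}$.
   Context: $F$ is a field of characteristic zero, $L$ an infinite-dimensional $F$-vector space, $E$ the Grassmann algebra of $L$ (for a basis $\{e_n\}$ of $L$, basis $1$ and monomials $e_{i_1}\cdots e_{i_m}$, $i_1<\cdots<i_m$, of length $m$). An automorphism $\varphi$ of $E$ with $\varphi^2=\mathrm{id}$ is of type 4 if for every basis $\gamma$ of $L$ no element $v\in\gamma$ satisfies $\varphi(v)=\pm v$. *)

(* Defs.v *)
(* Grassmann algebra of a countably infinite-dimensional
   space L with basis indexed by nat, built concretely on coefficient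
   functions {fset nat} -> F (coefficient of the monomial e_A). *)
From HB Require Import structures.
From mathcomp Require Import all_boot all_order all_algebra.
From mathcomp Require Import finmap.
Set Implicit Arguments. Unset Strict Implicit. Unset Printing Implicit Defensive.
Import GRing.Theory.
Local Open Scope ring_scope.


Section Grassmann.
Variable F : fieldType.

(* coefficient functions; x A = coefficient of the monomial e_A,
   e_A = e_{a1} ... e_{am} with a1 < ... < am the elements of A *)
Definition GE := {fset nat} -> F.

Definition zeroE : GE := fun _ => 0.
Definition addE (x y : GE) : GE := fun A => x A + y A.
Definition oppE (x : GE) : GE := fun A => - x A.
Definition scaleE (k : F) (x : GE) : GE := fun A => k * x A.
Definition monomE (A : {fset nat}) : GE := fun B => if B == A then 1 else 0.
Definition oneE : GE := monomE fset0.

(* sign of e_A e_B = gsign A B * e_(A u B) for disjoint A, B *)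
Definition gsign (A B : {fset nat}) : F :=
  (-1) ^+ (\sum_(a <- A) \sum_(b <- B) ((b < a)%N : nat))%N.

Definition mulE (x y : GE) : GE := fun C =>
  \sum_(A <- fpowerset C) gsign A (C `\` A)%fset * x A * y (C `\` A)%fset.

(* elements of E: finitely supported coefficient functions *)
Definition inGr (x : GE) : Prop :=
  exists S : seq {fset nat}, forall A, x A != 0 -> A \in S.

(* elements of L: elements of E supported on monomials of length 1 *)
Definition inL (x : GE) : Prop := inGr x /\ forall A, x A != 0 -> #|` A| = 1%N.

Definition sumE n (k : 'I_n -> F) (f : 'I_n -> GE) : GE :=
  \big[addE/zeroE]_(i < n) scaleE (k i) (f i).

Definition basisL (gamma : GE -> Prop) : Prop :=
  (forall v, gamma v -> inL v) /\
  (forall n (f : 'I_n -> GE), injective f -> (forall i, gamma (f i)) ->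
     forall k : 'I_n -> F, sumE k f = zeroE -> forall i, k i = 0) /\
  (forall x, inL x -> exists n (f : 'I_n -> GE) (k : 'I_n -> F),
     (forall i, gamma (f i)) /\ x = sumE k f).

Definition basisFamL (e : nat -> GE) : Prop :=
  (forall n, inL (e n)) /\
  (forall n (k : 'I_n -> F), sumE k (fun i => e i) = zeroE -> forall i, k i = 0) /\
  (forall x, inL x -> exists n (k : 'I_n -> F), x = sumE k (fun i => e i)).

Definition autE (phi : GE -> GE) : Prop :=
  (forall x, inGr x -> inGr (phi x)) /\
  (forall k x y, inGr x -> inGr y ->
     phi (addE (scaleE k x) y) = addE (scaleE k (phi x)) (phi y)) /\
  (forall x y, inGr x -> inGr y -> phi (mulE x y) = mulE (phi x) (phi y)) /\
  phi oneE = oneE /\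
  (forall x y, inGr x -> inGr y -> phi x = phi y -> x = y) /\
  (forall y, inGr y -> exists2 x, inGr x & phi x = y).

Definition involE (phi : GE -> GE) : Prop := forall x, inGr x -> phi (phi x) = x.

(* type 4 (phi^2 = id is required separately) *)
Definition type4 (phi : GE -> GE) : Prop :=
  forall gamma, basisL gamma -> forall v, gamma v -> phi v <> v /\ phi v <> oppE v.

Definition hasLongSummand (P : GE) : Prop := exists A, (2 <= #|` A|)%N /\ P A != 0.

End Grassmann.

(* Main.v *)
Require Import Defs.
From mathcomp Require Import all_boot all_order all_algebra.
From mathcomp Require Import finmap.
From mathcomp Require Import zify ring.
From Stdlib Require Import FunctionalExtensionality.
Local Open Scope ring_scope.

Set Implicit Arguments. Unset Strict Implicit. Unset Printing Implicit Defensive.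
Import GRing.Theory.

Section S.
Variable F : fieldType.

Lemma sumE_eval n (k : 'I_n -> F) (f : 'I_n -> GE F) A :
  sumE k f A = \sum_(i < n) k i * f i A.
Proof.
rewrite /sumE.
by rewrite (big_morph (fun x : GE F => x A) (id1:=0) (op1:=+%R)).
Qed.

Definition vv (e : nat -> GE F) := addE (scaleE (-1) (e 1%N)) (e 0%N).
Definition gam (e : nat -> GE F) (w : GE F) :=
  w = vv e \/ exists n, (0 < n)%N /\ w = e n.

Lemma inGr_lin k (x y : GE F) : inGr x -> inGr y -> inGr (addE (scaleE k x) y).
Proof.
move=> [S1 H1] [S2 H2]; exists (S1 ++ S2) => A; rewrite /addE /scaleE mem_cat.
case: (boolP (x A == 0)) => [/eqP -> | /H1 -> //].
by rewrite mulr0 add0r => /H2 ->; rewrite orbT.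
Qed.

Lemma inL_vv e : basisFamL e -> inL (vv e).
Proof.
case=> He _; split; first by apply: inGr_lin; [case: (He 1%N) | case: (He 0%N)].
move=> A; rewrite /vv /addE /scaleE.
case: (boolP (e 0%N A == 0)) => [/eqP -> | /(proj2 (He 0%N)) //].
by rewrite addr0 mulN1r oppr_eq0 => /(proj2 (He 1%N)).
Qed.

Lemma indep_e e : basisFamL e -> forall n (c : 'I_n -> F),
  (forall A, \sum_(j < n) c j * e j A = 0) -> forall j, c j = 0.
Proof.
case=> _ [Hi _] n c Hc; apply: Hi; apply: functional_extensionality => A.
by rewrite sumE_eval Hc.
Qed.

Lemma sum_delta N (g : nat -> F) n0 : (n0 < N)%N ->
  \sum_(j < N) ((j : nat) == n0)%:R * g j = g n0.
Proof.
move=> H; rewrite (bigD1 (Ordinal H)) //= eqxx mul1r big1 ?addr0 //.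
by move=> j /negbTE; rewrite -val_eqE /= => ->; rewrite mul0r.
Qed.


Lemma gam_indep e : basisFamL e -> forall m (f : 'I_m -> GE F), injective f ->
  (forall i, gam e (f i)) -> forall k : 'I_m -> F, sumE k f = zeroE F -> forall i, k i = 0.
Proof.
move=> He m f finj fg k Hk.
have Hex : forall i, exists o : option nat,
   f i = (match o with None => vv e | Some n => e n end) /\
   (forall n, o = Some n -> (0 < n)%N).
  move=> i; case: (fg i) => [-> | [n [n0 ->]]].
    by exists None.
  by exists (Some n); split => // n' [<-].
have [idx Hidx] := fin_all_exists Hex.
pose coef i (j : nat) : F := match idx i with
  None => (j == 0%N)%:R - (j == 1%N)%:R | Some n => (j == n)%:R end.
pose N := (2 + \max_(i < m) odflt 0%N (idx i))%N.
have leN : forall i n, idx i = Some n -> (n < N)%N.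
  move=> i n Hn; rewrite /N.
  have := @leq_bigmax _ (fun i => odflt 0%N (idx i)) i; rewrite Hn /=; lia.
have N0 : (0 < N)%N by rewrite /N; lia.
have N1 : (1 < N)%N by rewrite /N; lia.
have fexp : forall i A, f i A = \sum_(j < N) coef i j * e j A.
  move=> i A; case: (Hidx i) => -> Hpos; rewrite /coef; case E: (idx i) => [n|].
    by rewrite (sum_delta (fun j => e j A)) // (leN i n E).
  under eq_bigr do rewrite mulrBl.
  rewrite sumrB !(sum_delta (fun j => e j A)) // /vv /addE /scaleE; ring.
have Hc : forall j : 'I_N, \sum_(i < m) k i * coef i j = 0.
  apply: (indep_e He) => A.
  have := congr1 (fun x => x A) Hk; rewrite /= sumE_eval /zeroE => H; rewrite -[RHS]H.
  under [RHS]eq_bigr do rewrite fexp mulr_sumr.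
  rewrite exchange_big /=; apply: eq_bigr => j _; rewrite mulr_suml.
  by apply: eq_bigr => i _; rewrite mulrA.
have Ha : forall i, idx i = None -> k i = 0.
  move=> i Ei; have := Hc (Ordinal N0).
  rewrite (bigD1 i) //= big1 ?addr0.
    by rewrite /coef Ei /= subr0 mulr1.
  move=> i' ne; rewrite /coef; case E': (idx i') => [n'|].
    have := (Hidx i').2 n' E'.
    by case: n' {E'} => // n' _ /=; rewrite mulr0.
  exfalso; move/eqP: ne; apply; apply: finj.
  by rewrite (Hidx i').1 (Hidx i).1 E' Ei.
have Hb : forall i n, idx i = Some n -> k i = 0.
  move=> i n Ei; have := Hc (Ordinal (leN i n Ei)).
  rewrite (bigD1 i) //= big1 ?addr0.
    by rewrite /coef Ei /= eqxx mulr1.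
  move=> i' ne; rewrite /coef; case E': (idx i') => [n'|]; last by rewrite Ha // mul0r.
  have nn : n' != n.
    apply/eqP => eq; move/eqP: ne; apply; apply: finj.
    by rewrite (Hidx i').1 (Hidx i).1 E' Ei eq.
  by rewrite eq_sym (negbTE nn) mulr0.
by move=> i; case E: (idx i) => [n|]; [exact: Hb E | exact: Ha].
Qed.


Lemma gam_span e : basisFamL e -> forall x, inL x ->
  exists n (f : 'I_n -> GE F) (k : 'I_n -> F),
     (forall i, gam e (f i)) /\ x = sumE k f.
Proof.
move=> He x /((proj2 (proj2 He)) x) [n [k ->]].
case: n k => [|n] k.
  exists 0%N, (fun _ => e 1%N), k; split; first by case.
  by rewrite /sumE !big_ord0.
exists n.+2.
exists (fun i : 'I_n.+2 => match nat_of_ord i with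
   0 => vv e | 1 => e 1%N | j.+2 => e j.+1 end)%N.
exists (fun i : 'I_n.+2 => match nat_of_ord i with
   0 => k ord0 | 1 => k ord0 | j.+2 => k (inord j.+1) end)%N.
split.
  move=> [[|[|j]] Hj] /=; [by left | by right; exists 1%N; split | by right; exists j.+1; split].
apply: functional_extensionality => A; rewrite !sumE_eval.
rewrite big_ord_recl [RHS]big_ord_recl [in RHS]big_ord_recl /=.
rewrite /vv /addE /scaleE.
have -> : \sum_(i < n) k (lift ord0 i) * e (lift ord0 i) A =
  \sum_(i < n) k (inord i.+1) * e i.+1 A.
  apply: eq_bigr => i _.
  have Hi : (i.+1 < n.+1)%N by have := ltn_ord i; lia.
  have -> : lift ord0 i = inord i.+1 by apply: ord_inj; rewrite inordK.
  by rewrite inordK.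
rewrite addrA; congr (_ + _); ring.
Qed.

End S.

Unset Implicit Arguments.

Theorem mainTheorem13 (F : fieldType) (char0 : [pchar F] =i pred0) :
  ~ exists phi : GE F -> GE F,
      autE phi /\ involE phi /\ type4 phi /\
      exists (e : nat -> GE F) (P : GE F),
        basisFamL e /\ inGr P /\ hasLongSummand P /\
        forall n, phi (e n) = addE (oppE (e n)) (scaleE 2%:R P).
Proof.
move=> [phi [[_ [Hlin _]] [_ [T4 [e [P [He [_ [_ Hphi]]]]]]]]].
have Hb : basisL (gam e).
  split; first by move=> w [-> | [n [_ ->]]]; [exact: inL_vv | exact: (He.1 n)].
  split; first exact: gam_indep.
  exact: gam_span.
have [_] := T4 (gam e) Hb (vv e) (or_introl erefl).
apply; rewrite /vv Hlin; last by case: (He.1 0%N).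
  rewrite !Hphi; apply: functional_extensionality => A.
  rewrite /addE /scaleE /oppE; ring.
by case: (He.1 1%N).
Qed.
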